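(* Let $(\mathcal{S},\mathcal{A},P)$ be a finite communicating MDP and $V^*(s,g)$ the negative minimum expected number of steps to reach $g$ from $s$ (so $V^*(g,g)=0$). Let $\epsilon_V,\epsilon_\psi,\epsilon_\pi,\epsilon_{drift}\ge0$, and assume: (a) $V_\omega:\mathcal{S}\times\mathcal{S}\to\mathbb{R}$ satisfies $|V_\omega(s,g)-V^*(s,g)|\le\epsilon_V$ for all $s,g$; (b) $\phi:\mathcal{S}\times\mathcal{S}\to\mathcal{S}$ satisfies $\max(0,V_\omega(s,g)-V_\omega(s,\hat s)-V_\omega(\hat s,g))\le\epsilon_\psi$ for all $s,g$, with $\hat s=\phi(s,g)$. Fix $s_0,s_g\in\mathcal{S}$ and an integer $M\ge1$. Let $s_0,s_1,\dots,s_M$ be random states (with $s_0$ deterministic) and $C_0,\dots,C_{M-1}$ random nonnegative costs such that, writing $\hat s_k=\phi(s_k,s_g)$, for each $0\le k<M$: (c) $\mathbb{E}[C_k\mid s_k]\le -V^*(s_k,\hat s_k)+\epsilon_\pi$; (d) $\big|\mathbb{E}[V^*(s_{k+1},s_g)\mid s_k]-V^*(\hat s_k,s_g)\big|\le\epsilon_{drift}$; and (e) $s_M=s_g$ almost surely. Then $$\mathbb{E}\Big[\sum_{k=0}^{M-1}C_k\Big]\le -V^*(s_0,s_g)+M\,(\epsilon_\pi+3\epsilon_V+\epsilon_\psi+\epsilon_{drift}).$$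
   Context: Interpretation: at high-level step $k$ the agent at state $s_k$ proposes the subgoal $\hat s_k=\phi(s_k,s_g)$ using an anticipation model $\phi$, then runs a low-level goal-conditioned policy toward $\hat s_k$; $C_k$ is the number of steps (cost) of that segment and $s_{k+1}$ is the (random) state where it ends. A finite MDP is communicating if for any two states $s_i,s_j$ some policy reaches $s_j$ from $s_i$ with nonzero probability. Reward is $-1$ per step, so $-V^*(s,g)$ is the minimum expected hitting time of $g$ from $s$. $V_\omega$ is a learned approximation of $V^*$. *)

(* Defs.v *)
From HB Require Import structures.
From mathcomp Require Import all_boot all_order all_algebra.
From mathcomp Require Import all_classical all_reals all_analysis.

Set Implicit Arguments.
Unset Strict Implicit.
Unset Printing Implicit Defensive.

Import Order.TTheory GRing.Theory Num.Theory.
Import numFieldNormedType.Exports.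
Local Open Scope classical_set_scope.
Local Open Scope ring_scope.

Section MDP.
Variables (R : realType) (S A : finType).

(* A finite MDP: transition kernel P s a s' = Pr(next = s' | state s, action a). *)
Definition is_kernel (P : S -> A -> S -> R) : Prop :=
  forall s a, (forall s', 0 <= P s a s') /\ \sum_(s' : S) P s a s' = 1.

Definition history := seq (S * A).
Definition is_policy (pi : history -> S -> A -> R) : Prop :=
  forall h s, (forall a, 0 <= pi h s a) /\ \sum_(a : A) pi h s a = 1.

(* avoid P pi g h s n = probability, under policy pi (with past history h and
   current state s = s_0), that s_0, ..., s_n are all different from g,
   i.e. Pr(T_g > n) where T_g = min {t >= 0 | s_t = g}. *)
Fixpoint avoid (P : S -> A -> S -> R) (pi : history -> S -> A -> R) (g : S)
    (h : history) (s : S) (n : nat) : R :=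
  if s == g then 0 else
  match n with
  | 0 => 1
  | n'.+1 => \sum_(a : A) pi h s a *
              \sum_(s' : S) P s a s' * avoid P pi g (rcons h (s, a)) s' n'
  end.

(* Expected hitting time E[T_g] = sum_{n >= 0} Pr(T_g > n) (in \bar R). *)
Definition exp_hit (P : S -> A -> S -> R) (pi : history -> S -> A -> R)
    (s g : S) : \bar R :=
  (\sum_(0 <= n <oo) (avoid P pi g [::] s n)%:E)%E.

(* Communicating: from any s_i some policy reaches s_j with nonzero probability
   (Pr(T_{s_j} <= n) = 1 - Pr(T_{s_j} > n) > 0 for some n). *)
Definition communicating (P : S -> A -> S -> R) : Prop :=
  forall si sj, exists pi, is_policy pi /\ exists n, avoid P pi sj [::] si n < 1.

Definition min_hit (P : S -> A -> S -> R) (s g : S) : \bar R :=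
  ereal_inf [set exp_hit P pi s g | pi in [set pi | is_policy pi]].

(* V^*(s,g) = - (minimum expected number of steps to reach g from s);
   finite for communicating MDPs. *)
Definition Vstar (P : S -> A -> S -> R) (s g : S) : R := - fine (min_hit P s g).

End MDP.

Section CondExp.
Variables (R : realType) (d : measure_display) (T : measurableType d).
Variable (Pr : probability T R).

(* Conditional expectation of X given a discrete (finite-valued) random
   variable Y, evaluated on the event {Y = y} (meaningful when Pr(Y = y) > 0):
   E[X | Y = y] = E[X 1_{Y = y}] / Pr(Y = y). *)
Definition condE (S : Type) (X : T -> R) (Y : T -> S) (y : S) : \bar R :=
  ((\int[Pr]_(t in Y @^-1` [set y]) (X t)%:E) *
     ((fine (Pr (Y @^-1` [set y])))^-1)%:E)%E.
End CondExp.

(* Main.v *)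
Require Import Defs.
From HB Require Import structures.
From mathcomp Require Import all_boot all_order all_algebra.
From mathcomp Require Import all_classical all_reals all_analysis measurable_realfun.
From mathcomp Require Import ring lra.
Import Order.TTheory GRing.Theory Num.Theory.
Local Open Scope classical_set_scope.
Local Open Scope ring_scope.

Section H.
Context (R : realType) (S : finType) (d : measure_display) (T : measurableType d)
  (Pr : probability T R) (Y : T -> S)
  (hY : forall x, measurable (Y @^-1` [set x])).

Lemma comp_meas (g : S -> R) : measurable_fun setT (fun t => g (Y t)).
Proof.
move=> _ B mB.
have -> : setT `&` (fun t => g (Y t)) @^-1` B =
   \bigcup_(x in [set x | B (g x)]) Y @^-1` [set x].
  apply/seteqP; split => t /=.
    by move=> [_ Bt]; exists (Y t).
  by move=> [x Bx Yx]; split => //; move: Yx => /= ->.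
by apply: fin_bigcup_measurable => //; exact: finite_finset.
Qed.

Lemma comp_measE (g : S -> R) : measurable_fun setT (EFin \o (fun t => g (Y t))).
Proof. by apply/measurable_EFinP; exact: comp_meas. Qed.

Lemma partition_int (f : T -> \bar R) : measurable_fun setT f ->
  (forall t, 0 <= f t)%E ->
  (\int[Pr]_t f t = \sum_(x : S) \int[Pr]_(t in Y @^-1` [set x]) f t)%E.
Proof.
move=> mf f0.
have U : \big[setU/set0]_(i <- index_enum S) (Y @^-1` [set i]) = setT.
  apply/seteqP; split => // t _.
  have : Y t \in index_enum S by rewrite mem_index_enum.
  elim: (index_enum S) => [//|h s IH]; rewrite big_cons inE => /orP[/eqP E|/IH H].
    by left.
  by right.
have := @ge0_integral_bigsetU _ _ _ Pr _ (fun x => Y @^-1` [set x]) f (index_enum S) hY (index_enum_uniq S).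
rewrite /= U => ->//.
- move=> i j _ _ [t [/= <- <-]] //.
Qed.
End H.
Section V.
Context (R : realType) (S A : finType) (P : S -> A -> S -> R) (hP : is_kernel P).

Lemma avoid_ge0 pi : is_policy pi -> forall g n h s, 0 <= avoid P pi g h s n.
Proof.
move=> hpi g; elim=> [|n IH] h s /=; case: ifP => // _.
apply: sumr_ge0 => a _; apply: mulr_ge0; first by have [] := hpi h s.
apply: sumr_ge0 => s' _; apply: mulr_ge0 => //; by have [] := hP s a.
Qed.

Lemma Vstar_le0 s g : Vstar P s g <= 0.
Proof.
rewrite /Vstar oppr_le0; apply: fine_ge0.
apply/ereal_infP => _ [pi hpi <-]; rewrite /exp_hit.
apply: nneseries_ge0 => n _ _; rewrite lee_fin; exact: avoid_ge0.
Qed.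

Lemma Vstar_xx s : Vstar P s s = 0.
Proof.
rewrite /Vstar /min_hit.
set E := [set _ | _ in _].
have [E0|Ee] := eqVneq E set0.
  by rewrite E0 ereal_inf0 /= oppr0.
have -> : E = [set 0%E].
  apply/seteqP; split => y.
    move=> [pi hpi <-] /=; rewrite /exp_hit.
    apply: eseries0 => i _ _; case: i => [|i] /=; by rewrite eqxx.
  move=> /= ->; move/set0P: Ee => [z [pi hpi _]]; exists pi => //.
  rewrite /exp_hit; apply: eseries0 => i _ _; case: i => [|i] /=; by rewrite eqxx.
by rewrite ereal_inf1 /= oppr0.
Qed.
End V.

Theorem theorem3 (R : realType) (S A : finType) (P : S -> A -> S -> R)
  (hP : is_kernel P) (hcomm : communicating P)
  (epsV epspsi epspi epsdrift : R)
  (hV : 0 <= epsV) (hpsi : 0 <= epspsi) (hpi : 0 <= epspi) (hdrift : 0 <= epsdrift)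
  (Vw : S -> S -> R) (phi : S -> S -> S)
  (ha : forall s g, `|Vw s g - Vstar P s g| <= epsV)
  (hb : forall s g, Num.max 0 (Vw s g - Vw s (phi s g) - Vw (phi s g) g) <= epspsi)
  (s0 sg : S) (M : nat) (hM : (1 <= M)%N)
  (d : measure_display) (T : measurableType d) (Pr : probability T R)
  (st : nat -> T -> S) (C : nat -> T -> R)
  (hst_meas : forall k x, measurable (st k @^-1` [set x]))
  (hC_meas : forall k, measurable_fun setT (C k))
  (hC_ge0 : forall k t, 0 <= C k t)
  (hs0 : forall t, st 0%N t = s0)
  (hc : forall k, (k < M)%N -> forall x, (0 < Pr (st k @^-1` [set x]))%E ->
          (condE Pr (C k) (st k) x <= (- Vstar P x (phi x sg) + epspi)%:E)%E)
  (hd : forall k, (k < M)%N -> forall x, (0 < Pr (st k @^-1` [set x]))%E ->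
          (`| condE Pr (fun t => Vstar P (st k.+1 t) sg) (st k) x
              - (Vstar P (phi x sg) sg)%:E | <= epsdrift%:E)%E)
  (he : Pr (st M @^-1` [set sg]) = 1%E) :
  (\int[Pr]_t (\sum_(k < M) C k t)%:E
     <= (- Vstar P s0 sg + M%:R * (epspi + 3 * epsV + epspsi + epsdrift))%:E)%E.
Proof.
set eps := epspi + 3 * epsV + epspsi + epsdrift.
pose U x := - Vstar P x sg.
have U0 x : 0 <= U x by rewrite /U oppr_ge0; exact: Vstar_le0.
have Usg : U sg = 0 by rewrite /U Vstar_xx oppr0.
pose p k x := fine (Pr (st k @^-1` [set x])).
have Pp k x : Pr (st k @^-1` [set x]) = (p k x)%:E.
  rewrite /p fineK // ge0_fin_numE //.
  by apply: (le_lt_trans (probability_le1 _ _)) => //; exact: ltry.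
have p0 k x : 0 <= p k x by rewrite /p fine_ge0.
have mE k (h : S -> R) : measurable_fun setT (EFin \o (fun t => h (st k t))).
  exact: comp_measE.
have Eh k (h : S -> R) : (forall x, 0 <= h x) ->
    (\int[Pr]_t (h (st k t))%:E = (\sum_x h x * p k x)%:E)%E.
  move=> h0; rewrite (@partition_int _ _ _ _ Pr _ (hst_meas k)); last 2 first.
  - exact: (mE k h).
  - by move=> t; rewrite lee_fin.
  rewrite -sumEFin; apply: eq_bigr => x _.
  rewrite (eq_integral (fun _ => (h x)%:E)); last first.
    by move=> t; rewrite inE /= => ->.
  by rewrite integral_cst // EFinM -Pp.
have Sp k : \sum_x p k x = 1.
  have := Eh k (fun _ => 1) (fun _ => ler01).
  rewrite integral_cst // => H.
  have : ((\sum_x 1 * p k x)%:E = 1 :> \bar R)%E.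
    by rewrite -H mul1e; apply: probability_setT.
  under eq_bigr do rewrite mul1r.
  by move=> [].
pose g k := \sum_(x : S) U x * p k x.
have mC k : measurable_fun setT (EFin \o C k) by apply/measurable_EFinP.
have key k (hk : (k < M)%N) x :
  (\int[Pr]_(t in st k @^-1` [set x]) (C k t)%:E
   + \int[Pr]_(t in st k @^-1` [set x]) (U (st k.+1 t))%:E
   <= ((U x + eps) * p k x)%:E)%E.
  have mCx : measurable_fun (st k @^-1` [set x]) (EFin \o C k).
    exact: measurable_funS (mC k).
  have mUx : measurable_fun (st k @^-1` [set x]) (EFin \o (fun t => U (st k.+1 t))).
    exact: measurable_funS (mE k.+1 U).
  have [px0|px0] := eqVneq (p k x) 0.
    rewrite !null_set_integral //; last 2 first.
    - by apply: (eq_trans (Pp k x)); rewrite px0.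
    - by apply: (eq_trans (Pp k x)); rewrite px0.
    by rewrite px0 mulr0 adde0.
  have ppos : 0 < p k x by rewrite lt0r px0 p0.
  have hP0 : (0 < Pr (st k @^-1` [set x]))%E.
    by move: (Pp k x) => /= ->; rewrite lte_fin.
  set IC := (\int[Pr]_(t in _) (C k t)%:E)%E.
  set IU := (\int[Pr]_(t in _) (U (st k.+1 t))%:E)%E.
  have hcx : (IC * ((p k x)^-1)%:E <= (- Vstar P x (phi x sg) + epspi)%:E)%E.
    exact: (hc k hk x hP0).
  have hdx : (`| (\int[Pr]_(t in st k @^-1` [set x]) (Vstar P (st k.+1 t) sg)%:E)
       * ((p k x)^-1)%:E - (Vstar P (phi x sg) sg)%:E | <= epsdrift%:E)%E.
    exact: (hd k hk x hP0).
  have ICb : (IC <= ((- Vstar P x (phi x sg) + epspi) * p k x)%:E)%E.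
    have -> : IC = (IC * ((p k x)^-1)%:E * (p k x)%:E)%E.
      by rewrite -muleA -EFinM mulVf ?mule1.
    rewrite EFinM; apply: lee_wpmul2r => //; by rewrite lee_fin.
  have IU0 : (0 <= IU)%E by apply: integral_ge0 => t _; rewrite lee_fin.
  have IUb : (IU <= ((\sum_y U y) * p k x)%:E)%E.
    rewrite EFinM -Pp -integral_cst //; apply: ge0_le_integral => //.
    all: try by move=> t _; rewrite lee_fin.
    move=> t _; rewrite lee_fin.
    by rewrite (bigD1 (st k.+1 t)) //= lerDl; apply: sumr_ge0.
  have IUf : IU = (fine IU)%:E.
    rewrite fineK // ge0_fin_numE //; apply: (le_lt_trans IUb); exact: ltry.
  set J := fine IU.
  have IV : (\int[Pr]_(t in st k @^-1` [set x]) (Vstar P (st k.+1 t) sg)%:E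
      = - IU)%E.
    rewrite -integral_ge0N; last by move=> t _; rewrite lee_fin.
    by apply: eq_integral => t _; rewrite /U -EFinN opprK.
  rewrite IV IUf -EFinN -EFinM -EFinB abse_EFin lee_fin in hdx.
  rewrite IUf.
  apply: (le_trans (leeD ICb (lexx _))); rewrite -EFinD lee_fin.
  have Jb : J <= (epsdrift - Vstar P (phi x sg) sg) * p k x.
    have -> : J = (- (- J * (p k x)^-1)) * p k x.
      by field.
    apply: ler_wpM2r; first exact: p0.
    move: hdx; rewrite ler_norml -/J => /andP[h1 h2]; lra.
  have real : - Vstar P x (phi x sg) - Vstar P (phi x sg) sg
      <= U x + 3 * epsV + epspsi.
    have h1 := ha x (phi x sg); have h2 := ha x sg; have h3 := ha (phi x sg) sg.
    have h4 := hb x sg.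
    move: h1 h2 h3; rewrite !ler_norml => /andP[h1 h1'] /andP[h2 h2'] /andP[h3 h3'].
    have h5 : Vw x sg - Vw x (phi x sg) - Vw (phi x sg) sg <= epspsi.
      by apply: le_trans h4; rewrite le_max lexx orbT.
    rewrite /U; lra.
  have pp := p0 k x.
  have pr : 0 <= (U x + 3 * epsV + epspsi - (- Vstar P x (phi x sg) - Vstar P (phi x sg) sg)) * p k x.
    by apply: mulr_ge0 => //; rewrite subr_ge0.
  rewrite /eps -/J; lra.
have step k (hk : (k < M)%N) :
    (\int[Pr]_t (C k t)%:E <= (g k - g k.+1 + eps)%:E)%E.
  have h1 := @partition_int _ _ _ _ Pr _ (hst_meas k) (fun t => (C k t)%:E) (mC k)
    (fun t => hC_ge0 k t).
  have h2 := @partition_int _ _ _ _ Pr _ (hst_meas k) (fun t => (U (st k.+1 t))%:E)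
    (mE k.+1 U) (fun t => U0 _).
  rewrite Eh // in h2.
  have h3 : (\sum_x (\int[Pr]_(t in st k @^-1` [set x]) (C k t)%:E
      + \int[Pr]_(t in st k @^-1` [set x]) (U (st k.+1 t))%:E)
      <= \sum_x ((U x + eps) * p k x)%:E)%E.
    by apply: lee_sum => x _; exact: key.
  rewrite big_split /= -h1 -h2 in h3.
  have e : \sum_x (U x + eps) * p k x = g k + eps.
    under eq_bigr do rewrite mulrDl.
    by rewrite big_split /= -mulr_sumr Sp mulr1.
  rewrite sumEFin e -/(g k.+1) in h3.
  have I0 : (0 <= \int[Pr]_t (C k t)%:E)%E.
    by apply: integral_ge0 => t _; rewrite lee_fin.
  have If : (\int[Pr]_t (C k t)%:E)%E = (fine (\int[Pr]_t (C k t)%:E))%:E.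
    rewrite fineK // ge0_fin_numE //; apply: (le_lt_trans _ (ltry (g k + eps))).
    apply: le_trans h3; rewrite leeDl // lee_fin; apply: sumr_ge0 => x _.
    exact: mulr_ge0.
  rewrite If in h3 *; rewrite -EFinD lee_fin in h3; rewrite lee_fin; lra.
have single k y (H1 : p k y = 1) : g k = U y.
  have hz x : x != y -> p k x = 0.
    move=> xy; have := Sp k; rewrite (bigD1 y) //= H1 => /eqP.
    rewrite -subr_eq0 addrC addrK => /eqP/psumr_eq0P => H.
    exact: H (fun i _ => p0 k i) x xy.
  rewrite /g (bigD1 y) //= H1 mulr1 big1 ?addr0 // => x xy.
  by rewrite hz ?mulr0.
have g0 : g 0%N = U s0.
  apply: single.
  rewrite /p (_ : st 0%N @^-1` [set s0] = setT); last first.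
    by apply/seteqP; split => t //= _; exact: hs0.
  apply: (@eq_trans _ _ (fine (1%E : \bar R))) => //.
  by congr fine; apply: probability_setT.
have gM : g M = 0.
  rewrite -Usg; apply: single.
  by rewrite /p he.
have tel n : \sum_(i < n) (g i - g i.+1) = g 0%N - g n.
  elim: n => [|n IH]; first by rewrite big_ord0 subrr.
  by rewrite big_ord_recr /= IH addrA subrK.
rewrite (eq_integral (fun t => \sum_(k < M) (C k t)%:E)%E); last first.
  by move=> t _; rewrite sumEFin.
rewrite ge0_integral_sum //; last 2 first.
- move=> k; exact: mC.
- by move=> k t _; rewrite lee_fin.
apply: (@le_trans _ _ (\sum_(k < M) (g k - g k.+1 + eps)%:E)%E).
  by apply: lee_sum => k _; exact: step.
rewrite sumEFin lee_fin big_split /= tel g0 gM sumr_const card_ord.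
by rewrite /U subr0 mulr_natl.
Qed.
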